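(* Let $\mathcal{P}$ be a dipath space and let $f: P \to V(\mathcal{P})$ be a walk in $\mathcal{P}$. Then the space $\widehat{f}$ induced by $f$ is finitary and connected.
   Context: A subset $Y$ of a linearly ordered set $X$ is called complete (in $X$) if every nonempty $Z \subseteq Y$ has a supremum and an infimum in $X$ and both lie in $Y$. A path is a linearly ordered set $(P,\le_P)$ that is complete in itself. Distinct paths may share elements; intersections and unions of paths refer to their underlying sets. A path is trivial if it has exactly one element. A set of paths is compatible if for any two paths $P,Q$ in it, $P\cap Q$ is complete in $P$ (with the order of $P$). For $x \le y$ in a path $P$, the segment of $P$ from $x$ to $y$ is the interval $[x,y]$ of $P$ with the induced order. A path $P$ connects to a path $Q$ if $P \cap Q=\{x\}$ where $x=\max P=\min Q$; in this case the concatenation of $P$ and $Q$ is $P\cup Q$ with the order extending both orders in which every element of $P$ precedes every element of $Q$. The inverse of a path is the same set with the reversed order. A dipath space is a compatible set of paths closed under segments and under concatenations (whenever $P,Q$ are members and $P$ connects to $Q$, their concatenation is a member). A path space is a dipath space closed under inverses. The ground set $V(\mathcal{P})$ is the union of the underlying sets of the paths of $\mathcal{P}$. For a set of paths $\mathcal{Q}$, $\widehat{\mathcal{Q}}$ denotes the set obtained by first adding all segments of paths of $\mathcal{Q}$ and then closing under concatenations (repeatedly adding, in countably many steps, concatenations of pairs of paths obtained so far where the first connects to the second); $\overline{\mathcal{Q}}$ denotes $\widehat{\mathcal{Q}'}$ where $\mathcal{Q}'$ is $\mathcal{Q}$ together with the inverses of its paths. For a path space $\mathcal{S}$, write $x\sim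 y$ if some path of $\mathcal{S}$ has minimum $x$ and maximum $y$; $\mathcal{S}$ is connected if $V(\mathcal{S})$ is a single $\sim$-class; a dipath space $\mathcal{S}$ is connected if $\overline{\mathcal{S}}$ is connected. A dipath space $\mathcal{S}$ is finitary if there is a finite set of paths $\mathcal{Q}$ with $\widehat{\mathcal{Q}}=\mathcal{S}$. Walks: Let $P$ be a path (not necessarily in $\mathcal{P}$). For a closed interval $I$ of $P$ on which $f$ is injective, $f[I]$ denotes the image of $I$ ordered so that $f$ is order-preserving. A walk in $\mathcal{P}$ is a map $f:P\to V(\mathcal{P})$ such that for every $x\in P$: if $x\neq\max P$ there is $y>x$ such that for every $z$ with $x<z\le y$, $f$ is injective on $[x,z]$ and $f[[x,z]]\in\mathcal{P}$; and if $x\neq \min P$ there is $y<x$ such that for every $z$ with $y\le z<x$, $f$ is injective on $[z,x]$ and $f[[z,x]]\in\mathcal{P}$. Let $\mathcal{S}_f$ be the set of all paths $f[I]$, where $I$ is a closed interval of $P$ on which $f$ is injective and $f[I]\in\mathcal{P}$. The space induced by $f$ is $\widehat{f}:=\widehat{\mathcal{S}_f}$. *)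

(* Defs.v *)
From Stdlib Require Import List.
Set Implicit Arguments.

(** A (candidate) path over an ambient type [T]: an underlying set together
    with an order relation on it.  Whether it really is a path is the
    predicate [is_path] below. *)
Record path (T : Type) := mkPath { pset : T -> Prop; ple : T -> T -> Prop }.
Arguments mkPath {T}.
Arguments pset {T}.
Arguments ple {T}.

Section Defs.
Variable T : Type.

Definition is_sup (X : T -> Prop) (le : T -> T -> Prop) (Z : T -> Prop) (s : T) :=
  X s /\ (forall z, Z z -> le z s) /\
  (forall u, X u -> (forall z, Z z -> le z u) -> le s u).
Definition is_inf (X : T -> Prop) (le : T -> T -> Prop) (Z : T -> Prop) (i : T) :=
  X i /\ (forall z, Z z -> le i z) /\
  (forall u, X u -> (forall z, Z z -> le u z) -> le u i).

Definition complete_in (X : T -> Prop) (le : T -> T -> Prop) (Y : T -> Prop) :=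
  forall Z : T -> Prop, (forall z, Z z -> Y z) -> (exists z, Z z) ->
    (exists s, is_sup X le Z s /\ Y s) /\ (exists i, is_inf X le Z i /\ Y i).

Definition is_path (P : path T) :=
  (forall x y, ple P x y -> pset P x /\ pset P y) /\
  (forall x, pset P x -> ple P x x) /\
  (forall x y, ple P x y -> ple P y x -> x = y) /\
  (forall x y z, ple P x y -> ple P y z -> ple P x z) /\
  (forall x y, pset P x -> pset P y -> ple P x y \/ ple P y x) /\
  (exists x, pset P x) /\
  complete_in (pset P) (ple P) (pset P).

Definition is_max (P : path T) (x : T) :=
  pset P x /\ forall u, pset P u -> ple P u x.
Definition is_min (P : path T) (x : T) :=
  pset P x /\ forall u, pset P u -> ple P x u.

Definition compatible (S : path T -> Prop) :=
  forall P Q, S P -> S Q ->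
    complete_in (pset P) (ple P) (fun t => pset P t /\ pset Q t).

Definition in_seg (P : path T) (x y : T) (z : T) := ple P x z /\ ple P z y.

Definition segment (P : path T) (x y : T) : path T :=
  mkPath (in_seg P x y)
         (fun a b => ple P a b /\ in_seg P x y a /\ in_seg P x y b).

Definition connects (P Q : path T) :=
  exists x, (forall t, (pset P t /\ pset Q t) <-> t = x) /\ is_max P x /\ is_min Q x.

Definition concat (P Q : path T) : path T :=
  mkPath (fun t => pset P t \/ pset Q t)
         (fun a b => ple P a b \/ ple Q a b \/ (pset P a /\ pset Q b)).

Definition inverse (P : path T) : path T :=
  mkPath (pset P) (fun a b => ple P b a).

Definition dipath_space (S : path T -> Prop) :=
  (forall P, S P -> is_path P) /\
  compatible S /\
  (forall P x y, S P -> ple P x y -> S (segment P x y)) /\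
  (forall P Q, S P -> S Q -> connects P Q -> S (concat P Q)).

Definition path_space (S : path T -> Prop) :=
  dipath_space S /\ (forall P, S P -> S (inverse P)).

Definition ground (S : path T -> Prop) (t : T) := exists P, S P /\ pset P t.

(** [hat Q]: add all segments of paths of [Q], then close under
    concatenations (least closure = union of the countably many steps). *)
Inductive hat (Q : path T -> Prop) : path T -> Prop :=
| hat_seg : forall P x y, Q P -> ple P x y -> hat Q (segment P x y)
| hat_cat : forall P1 P2, hat Q P1 -> hat Q P2 -> connects P1 P2 ->
              hat Q (concat P1 P2).

Definition bar (Q : path T -> Prop) : path T -> Prop :=
  hat (fun R => Q R \/ exists P, Q P /\ R = inverse P).

Definition sim (S : path T -> Prop) (x y : T) :=
  exists P, S P /\ is_min P x /\ is_max P y.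

Definition ps_connected (S : path T -> Prop) :=
  (exists x, ground S x) /\ (forall x y, ground S x -> ground S y -> sim S x y).

Definition dps_connected (S : path T -> Prop) := ps_connected (bar S).

Definition finitary (S : path T -> Prop) :=
  exists Q : list (path T), (forall R, In R Q -> is_path R) /\
    (forall R, hat (fun R' => In R' Q) R <-> S R).

End Defs.

Section Walks.
Variables U T : Type.

Definition injective_on (f : U -> T) (I : U -> Prop) :=
  forall u v, I u -> I v -> f u = f v -> u = v.

(** [f[[x,y]]]: the image of the interval [x,y] of [P], ordered so that [f]
    is order preserving (meaningful when f is injective on [x,y]). *)
Definition image_path (P : path U) (f : U -> T) (x y : U) : path T :=
  mkPath (fun t => exists u, in_seg P x y u /\ f u = t)
         (fun a b => exists u v, in_seg P x y u /\ in_seg P x y v /\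
                      ple P u v /\ f u = a /\ f v = b).

Definition walk (PP : path T -> Prop) (P : path U) (f : U -> T) :=
  (forall x, pset P x -> ground PP (f x)) /\
  forall x, pset P x ->
    (~ is_max P x ->
       exists y, ple P x y /\ x <> y /\
         forall z, ple P x z -> x <> z -> ple P z y ->
           injective_on f (in_seg P x z) /\ PP (image_path P f x z)) /\
    (~ is_min P x ->
       exists y, ple P y x /\ y <> x /\
         forall z, ple P y z -> ple P z x -> z <> x ->
           injective_on f (in_seg P z x) /\ PP (image_path P f z x)).

Definition S_f (PP : path T -> Prop) (P : path U) (f : U -> T) : path T -> Prop :=
  fun R => exists x y, ple P x y /\ injective_on f (in_seg P x y) /\
             PP (image_path P f x y) /\ R = image_path P f x y.

Definition induced (PP : path T -> Prop) (P : path U) (f : U -> T) :=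
  hat (S_f PP P f).

End Walks.

(* Main.v *)
Require Import Defs.
From Stdlib Require Import List Classical FunctionalExtensionality PropExtensionality.
Require Import Defs.

Section Gen.
Context {T : Type}.
Implicit Types R B : path T.

Lemma path_ext R R' : (forall t, pset R t <-> pset R' t) ->
  (forall a b, ple R a b <-> ple R' a b) -> R = R'.
Proof.
  destruct R as [s l], R' as [s' l']; simpl; intros H1 H2.
  assert (s = s') by (apply functional_extensionality; intro; apply propositional_extensionality; auto).
  assert (l = l') by (apply functional_extensionality; intro; apply functional_extensionality; intro;
    apply propositional_extensionality; auto).
  subst; reflexivity.
Qed.

Lemma pmem {R a b} : is_path R -> ple R a b -> pset R a /\ pset R b.
Proof. intros H; apply H. Qed.
Lemma prefl {R a} : is_path R -> pset R a -> ple R a a.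
Proof. intros H; apply H. Qed.
Lemma pantis {R a b} : is_path R -> ple R a b -> ple R b a -> a = b.
Proof. intros H; apply H. Qed.
Lemma ptrans {R a b c} : is_path R -> ple R a b -> ple R b c -> ple R a c.
Proof. intros H; apply H. Qed.
Lemma ptot {R a b} : is_path R -> pset R a -> pset R b -> ple R a b \/ ple R b a.
Proof. intros H; apply H. Qed.

Lemma hat_mono (Q Q' : path T -> Prop) R : (forall X, Q X -> Q' X) -> hat Q R -> hat Q' R.
Proof.
  intros HQ H; induction H.
  - apply hat_seg; auto.
  - apply hat_cat; auto.
Qed.

Lemma hat_pset (Q : path T -> Prop) R t :
  (forall X a b, Q X -> ple X a b -> pset X a /\ pset X b) ->
  hat Q R -> pset R t -> exists X, Q X /\ pset X t.
Proof.
  intros HQ H; revert t; induction H; intros t Ht.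
  - simpl in Ht. destruct Ht as [H1 H2]. exists P; split; auto.
    eapply HQ; eauto.
  - simpl in Ht; destruct Ht; auto.
Qed.

Lemma seg_minmax {B x y} : is_path B -> ple B x y ->
  is_min (segment B x y) x /\ is_max (segment B x y) y.
Proof.
  intros HB Hxy. destruct (pmem HB Hxy) as [Hx Hy].
  pose proof (prefl HB Hx). pose proof (prefl HB Hy).
  split; split; simpl; unfold in_seg.
  - auto.
  - intros u [H1 H2]; repeat split; auto.
  - auto.
  - intros u [H1 H2]; repeat split; auto.
Qed.

Lemma seg_seg B x y a b : is_path B -> ple (segment B x y) a b ->
  segment (segment B x y) a b = segment B a b.
Proof.
  intros HB [Hab [[Hxa Hay] [Hxb Hby]]].
  assert (Hs : forall z, in_seg (segment B x y) a b z <-> in_seg B a b z).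
  { intro z; unfold in_seg; simpl; unfold in_seg; split.
    - intros [[H1 _] [H2 _]]; split; auto.
    - intros [H1 H2].
      assert (ple B x z) by exact (ptrans HB Hxa H1).
      assert (ple B z y) by exact (ptrans HB H2 Hby).
      repeat split; auto. }
  apply path_ext.
  - intro t; simpl; apply Hs.
  - intros c d; simpl. rewrite (Hs c), (Hs d).
    unfold in_seg; split.
    + intros [[H _] H']; auto.
    + intros [H [[H1 H2] [H3 H4]]].
      assert (ple B x c) by exact (ptrans HB Hxa H1).
      assert (ple B c y) by exact (ptrans HB H2 Hby).
      assert (ple B x d) by exact (ptrans HB Hxa H3).
      assert (ple B d y) by exact (ptrans HB H4 Hby).
      repeat split; auto.
Qed.

Section Cat.
Variables R1 R2 : path T.
Variable m : T.
Hypothesis HR1 : is_path R1.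
Hypothesis HR2 : is_path R2.
Hypothesis Hm : forall t, pset R1 t /\ pset R2 t <-> t = m.
Hypothesis Hmax : is_max R1 m.
Hypothesis Hmin : is_min R2 m.

Lemma cat_mem {c d} : ple (concat R1 R2) c d -> pset (concat R1 R2) c /\ pset (concat R1 R2) d.
Proof.
  simpl; intros [H|[H|[H1 H2]]].
  - destruct (pmem HR1 H); auto.
  - destruct (pmem HR2 H); auto.
  - auto.
Qed.

Lemma cat_m1 {t} : pset R1 t -> pset R2 t -> t = m.
Proof. intros; apply Hm; auto. Qed.

Lemma L0 c d : pset R1 c -> pset R1 d -> ple (concat R1 R2) c d -> ple R1 c d.
Proof.
  intros Hc Hd; simpl; intros [H|[H|[H1 H2]]]; auto.
  - destruct (pmem HR2 H). rewrite (cat_m1 Hc), (cat_m1 Hd); auto.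
    apply prefl; auto; apply Hmax.
  - rewrite (cat_m1 Hd H2). apply Hmax; auto.
Qed.

Lemma L0' c d : pset R2 c -> pset R2 d -> ple (concat R1 R2) c d -> ple R2 c d.
Proof.
  intros Hc Hd; simpl; intros [H|[H|[H1 H2]]]; auto.
  - destruct (pmem HR1 H). rewrite (cat_m1 H0 Hc), (cat_m1 H1 Hd); auto.
    apply prefl; auto; apply Hmin.
  - rewrite (cat_m1 H1 Hc). apply Hmin; auto.
Qed.

Lemma L1 z b : pset R1 b -> ple (concat R1 R2) z b -> pset R1 z.
Proof.
  intros Hb; simpl; intros [H|[H|[H1 H2]]].
  - apply (pmem HR1 H).
  - destruct (pmem HR2 H) as [Hz Hb2]. pose proof (cat_m1 Hb Hb2); subst b.
    assert (z = m) by (apply (pantis HR2); auto; apply Hmin; auto).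
    subst; apply Hmax.
  - auto.
Qed.

Lemma L1' a z : pset R2 a -> ple (concat R1 R2) a z -> pset R2 z.
Proof.
  intros Ha; simpl; intros [H|[H|[H1 H2]]].
  - destruct (pmem HR1 H) as [Ha1 Hz]. pose proof (cat_m1 Ha1 Ha); subst a.
    assert (z = m) by (apply (pantis HR1); auto; apply Hmax; auto).
    subst; apply Hmin.
  - apply (pmem HR2 H).
  - auto.
Qed.

Lemma cat_seg1 a b : ple R1 a b -> segment (concat R1 R2) a b = segment R1 a b.
Proof.
  intros Hab. destruct (pmem HR1 Hab) as [Ha Hb].
  assert (Hs : forall z, in_seg (concat R1 R2) a b z <-> in_seg R1 a b z).
  { intro z; unfold in_seg; split.
    - intros [H1 H2]. assert (pset R1 z) by (eapply L1; eauto).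
      split; apply L0; auto.
    - intros [H1 H2]; simpl; auto. }
  apply path_ext; [intro t; apply Hs|].
  intros c d; simpl; rewrite (Hs c), (Hs d). split.
  - intros [H [H1 H2]]. split; auto. apply L0; auto.
    + eapply (pmem HR1); apply H1.
    + eapply (pmem HR1); apply H2.
  - intros [H [H1 H2]]; auto.
Qed.

Lemma cat_seg2 a b : ple R2 a b -> segment (concat R1 R2) a b = segment R2 a b.
Proof.
  intros Hab. destruct (pmem HR2 Hab) as [Ha Hb].
  assert (Hs : forall z, in_seg (concat R1 R2) a b z <-> in_seg R2 a b z).
  { intro z; unfold in_seg; split.
    - intros [H1 H2]. assert (pset R2 z) by (eapply L1'; [exact Ha|exact H1]).
      split; apply L0'; auto.
    - intros [H1 H2]; simpl; auto. }
  apply path_ext; [intro t; apply Hs|].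
  intros c d; simpl; rewrite (Hs c), (Hs d). split.
  - intros [H [H1 H2]]. split; auto. apply L0'; auto.
    + eapply (pmem HR2); apply H1.
    + eapply (pmem HR2); apply H2.
  - intros [H [H1 H2]]; auto.
Qed.

Lemma cat_seg3 a b : pset R1 a -> pset R2 b ->
  segment (concat R1 R2) a b = concat (segment R1 a m) (segment R2 m b).
Proof.
  intros Ha Hb.
  assert (Hm1 : pset R1 m) by apply Hmax.
  assert (Hm2 : pset R2 m) by apply Hmin.
  assert (Hs : forall z, in_seg (concat R1 R2) a b z <-> in_seg R1 a m z \/ in_seg R2 m b z).
  { intro z; unfold in_seg; split.
    - intros [H1 H2]. destruct (cat_mem H1) as [_ [Hz|Hz]].
      + left; split. apply L0; auto. apply Hmax; auto.
      + right; split. apply Hmin; auto. apply L0'; auto.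
    - intros [[H1 H2]|[H1 H2]]; simpl.
      + destruct (pmem HR1 H1). auto.
      + destruct (pmem HR2 H2). auto. }
  apply path_ext; [intro t; simpl; apply Hs|].
  intros c d; simpl. rewrite (Hs c), (Hs d). split.
  - intros [H [Hc Hd]].
    assert (Hc' : in_seg R1 a m c \/ in_seg R2 m b c ->
                  in_seg R2 m b c -> in_seg R1 a m d -> in_seg R1 a m c).
    { intros _ [Hc1 Hc2] [Hd1 Hd2].
      assert (pset R1 c) by (eapply L1; [apply (pmem HR1 Hd1)|exact H]).
      pose proof (cat_m1 H0 (proj1 (pmem HR2 Hc2))). subst c.
      split; [apply Hmax; auto | apply prefl; auto]. }
    destruct Hd as [Hd|Hd].
    + assert (Hc1 : in_seg R1 a m c) by (destruct Hc as [Hc|Hc]; auto).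
      left. split; [|split]; auto. apply L0; auto.
      apply (pmem HR1 (proj2 Hc1)). apply (pmem HR1 (proj2 Hd)).
    + destruct Hc as [Hc|Hc].
      * right; right; split; auto.
      * right; left. split; [|split]; auto. apply L0'; auto.
        apply (pmem HR2 (proj1 Hc)). apply (pmem HR2 (proj1 Hd)).
  - intros [[H [Hc Hd]]|[[H [Hc Hd]]|[Hc Hd]]]; split; auto.
    right; right. split. apply (pmem HR1 (proj1 Hc)). apply (pmem HR2 (proj2 Hd)).
Qed.

End Cat.

Lemma seg_closed (Q : path T -> Prop) :
  (forall B, Q B -> is_path B) -> (forall R, hat Q R -> is_path R) ->
  forall R, hat Q R -> forall a b, ple R a b -> hat Q (segment R a b).
Proof.
  intros HQ HH R H; induction H; intros a b Hab.
  - rewrite seg_seg; auto. apply hat_seg; auto. apply Hab.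
  - destruct H1 as [m [Hm [Hmax Hmin]]].
    pose proof (HH _ H) as HP1. pose proof (HH _ H0) as HP2.
    destruct Hab as [Hab|[Hab|[Ha Hb]]].
    + rewrite cat_seg1 with (m := m); auto.
    + rewrite cat_seg2 with (m := m); auto.
    + rewrite cat_seg3 with (m := m); auto.
      apply hat_cat.
      * apply IHhat1. apply Hmax; auto.
      * apply IHhat2. apply Hmin; auto.
      * assert (Ham : ple P1 a m) by (apply Hmax; auto).
        assert (Hmb : ple P2 m b) by (apply Hmin; auto).
        exists m. split; [|split; [apply (seg_minmax HP1 Ham)|apply (seg_minmax HP2 Hmb)]].
        intro t; simpl; unfold in_seg; split.
        -- intros [[H1 H2] [H3 H4]]. apply Hm. split. apply (pmem HP1 H2). apply (pmem HP2 H3).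
        -- intros ->. split; split; auto.
           apply (prefl HP1); apply Hmax. apply (prefl HP2); apply Hmin.
Qed.


Lemma cat_minmax A B x y : is_min A x -> is_max B y ->
  is_min (concat A B) x /\ is_max (concat A B) y.
Proof.
  intros [Hx Hx'] [Hy Hy']. split; split; simpl; auto.
  - intros u [Hu|Hu]; auto.
  - intros u [Hu|Hu]; auto.
Qed.

Definition reach (H : path T -> Prop) x y := exists R, H R /\ is_min R x /\ is_max R y.

Lemma trans_reach (PP H : path T -> Prop) : compatible PP -> (forall R, H R -> PP R) ->
  (forall R, H R -> is_path R) ->
  (forall R a b, H R -> ple R a b -> H (segment R a b)) ->
  (forall R1 R2, H R1 -> H R2 -> connects R1 R2 -> H (concat R1 R2)) ->
  forall x y z, reach H x y -> reach H y z -> reach H x z.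
Proof.
  intros Hc HPP Hpath Hseg Hcat x y z [R1 [H1 [Hx1 Hy1]]] [R2 [H2 [Hy2 Hz2]]].
  pose proof (Hpath _ H1) as P1. pose proof (Hpath _ H2) as P2.
  destruct (Hc R1 R2 (HPP _ H1) (HPP _ H2) (fun t => pset R1 t /\ pset R2 t)) as [_ [w [[Hw1 [Hwlow _]] [Hw1' Hw2]]]].
  - auto.
  - exists y; split; [apply Hy1|apply Hy2].
  - assert (Hxw : ple R1 x w) by (apply Hx1; auto).
    assert (Hwz : ple R2 w z) by (apply Hz2; auto).
    destruct (seg_minmax P1 Hxw) as [Mi1 Ma1].
    destruct (seg_minmax P2 Hwz) as [Mi2 Ma2].
    exists (concat (segment R1 x w) (segment R2 w z)). split; [|apply cat_minmax; auto].
    apply Hcat; auto.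
    exists w; split; auto.
    intro t; simpl; unfold in_seg; split.
    + intros [[Ha Hb] [Hc' Hd]].
      apply (pantis P1); auto. apply Hwlow. split. apply (pmem P1 Ha). apply (pmem P2 Hc').
    + intros ->. split; split; auto; first [apply (prefl P1) | apply (prefl P2)]; auto.
Qed.

End Gen.

Section W.
Context {U T : Type} (PP : path T -> Prop) (P : path U) (f : U -> T).
Context (HPP : dipath_space PP) (HP : is_path P) (Hw : walk PP P f).

Definition img x y := image_path P f x y.
Definition good x y := injective_on f (in_seg P x y) /\ PP (img x y).

Lemma PP_path {R} : PP R -> is_path R.
Proof. apply HPP. Qed.
Lemma PP_seg R a b : PP R -> ple R a b -> PP (segment R a b).
Proof. apply HPP. Qed.

Lemma inj_sub {x y u v} : injective_on f (in_seg P x y) -> ple P x u -> ple P v y ->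
  injective_on f (in_seg P u v).
Proof.
  intros H Hxu Hvy w1 w2 [A1 A2] [B1 B2]. apply H.
  - split; [exact (ptrans HP Hxu A1) | exact (ptrans HP A2 Hvy)].
  - split; [exact (ptrans HP Hxu B1) | exact (ptrans HP B2 Hvy)].
Qed.

Lemma img_minmax x y : ple P x y -> is_min (img x y) (f x) /\ is_max (img x y) (f y).
Proof.
  intros Hxy. destruct (pmem HP Hxy) as [Hx Hy].
  pose proof (prefl HP Hx). pose proof (prefl HP Hy).
  split; split; simpl; unfold in_seg.
  - exists x; auto.
  - intros t [w [[H1 H2] <-]]. exists x, w. repeat split; auto.
  - exists y; auto.
  - intros t [w [[H1 H2] <-]]. exists w, y. repeat split; auto.
Qed.

Lemma E1 {c d u v} : injective_on f (in_seg P c d) -> ple P c u -> ple P u v -> ple P v d ->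
  img u v = segment (img c d) (f u) (f v).
Proof.
  intros Hi Hcu Huv Hvd.
  assert (Hud : ple P u d) by exact (ptrans HP Huv Hvd).
  assert (Hcv : ple P c v) by exact (ptrans HP Hcu Huv).
  assert (Hin : forall w, in_seg P u v w -> in_seg P c d w).
  { intros w [A B]. split; [exact (ptrans HP Hcu A)|exact (ptrans HP B Hvd)]. }
  assert (Hu : in_seg P c d u) by (split; auto).
  assert (Hv : in_seg P c d v) by (split; auto).
  assert (Hs : forall t, pset (img u v) t <-> pset (segment (img c d) (f u) (f v)) t).
  { intro t; simpl; unfold in_seg; simpl; split.
    - intros [w [Hw' <-]]. pose proof (Hin w Hw') as [Hw3 Hw4]. destruct Hw' as [Hw1 Hw2].
      split; [exists u, w | exists w, v]; repeat split; auto.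
    - intros [[w1 [w2 [A1 [A2 [Le [E1 E2]]]]]] [w3 [w4 [B1 [B2 [Le' [E3 E4]]]]]]].
      assert (w1 = u) by (apply Hi; auto). subst w1.
      assert (w4 = v) by (apply Hi; auto). subst w4.
      assert (w3 = w2) by (apply Hi; auto; congruence). subst w3.
      exists w2; split; [split|]; auto. }
  apply path_ext; [exact Hs|].
  intros p q. simpl. unfold in_seg at 3 4. split.
  - intros [w1 [w2 [A1 [A2 [Le [<- <-]]]]]].
    split; [exists w1, w2; repeat split; auto; apply Hin; auto|].
    split; [apply (Hs (f w1)) | apply (Hs (f w2))]; simpl; eauto.
  - intros [[w1 [w2 [A1 [A2 [Le [<- <-]]]]]] [Hp Hq]].
    apply (Hs (f w1)) in Hp. apply (Hs (f w2)) in Hq.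
    destruct Hp as [w [Hw1 E]]. destruct Hq as [w' [Hw2 E']].
    assert (w = w1) by (apply Hi; auto). subst w.
    assert (w' = w2) by (apply Hi; auto). subst w'.
    exists w1, w2; repeat split; auto; apply Hw1 || apply Hw2.
Qed.


Lemma E2 {x m y} : injective_on f (in_seg P x y) -> ple P x m -> ple P m y ->
  img x y = concat (img x m) (img m y) /\ connects (img x m) (img m y).
Proof.
  intros Hi Hxm Hmy.
  assert (Hxy : ple P x y) by exact (ptrans HP Hxm Hmy).
  destruct (pmem HP Hxm) as [Hx Hm]. destruct (pmem HP Hmy) as [_ Hy].
  assert (Hsplit : forall w, in_seg P x y w <-> in_seg P x m w \/ in_seg P m y w).
  { intro w; unfold in_seg; split.
    - intros [A B]. destruct (ptot HP Hm (proj2 (pmem HP A))) as [C|C]; auto.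
    - intros [[A B]|[A B]]; split; auto.
      exact (ptrans HP B Hmy). exact (ptrans HP Hxm A). }
  split.
  - apply path_ext.
    + intro t; simpl. split.
      * intros [w [Hw' E]]. apply Hsplit in Hw'. destruct Hw'; eauto.
      * intros [[w [Hw' E]]|[w [Hw' E]]]; exists w; split; auto; apply Hsplit; auto.
    + intros p q; simpl. split.
      * intros [w1 [w2 [A1 [A2 [Le [<- <-]]]]]].
        apply Hsplit in A1. apply Hsplit in A2.
        destruct A1 as [A1|A1]; destruct A2 as [A2|A2].
        -- left. exists w1, w2; auto.
        -- right; right. split; eauto.
        -- assert (w1 = m) by (apply (pantis HP); [exact (ptrans HP Le (proj2 A2))|apply A1]).
           subst w1. left. exists m, w2. repeat split; auto; try apply A2; apply (prefl HP); auto.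
        -- right; left. exists w1, w2; auto.
      * intros [[w1 [w2 [A1 [A2 [Le [<- <-]]]]]]|[[w1 [w2 [A1 [A2 [Le [<- <-]]]]]]|
               [[w1 [A1 <-]] [w2 [A2 <-]]]]].
        -- exists w1, w2; repeat split; auto; apply Hsplit; auto.
        -- exists w1, w2; repeat split; auto; apply Hsplit; auto.
        -- exists w1, w2; repeat split; try (apply Hsplit; auto).
           exact (ptrans HP (proj2 A1) (proj1 A2)).
  - exists (f m). split.
    + intro t; simpl; split.
      * intros [[w1 [A1 <-]] [w2 [A2 E]]].
        assert (w2 = w1) by (apply Hi; auto; apply Hsplit; auto). subst w2.
        f_equal. apply (pantis HP); [apply A1|apply A2].
      * intros ->. split; exists m; repeat split; auto; apply (prefl HP); auto.
    + split; [apply img_minmax; auto | apply img_minmax; auto].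
Qed.

Lemma good_trivial a : pset P a -> good a a.
Proof.
  intros Ha. pose proof (prefl HP Ha) as Haa.
  assert (Hone : forall w, in_seg P a a w -> w = a).
  { intros w [A B]; apply (pantis HP); auto. }
  split.
  - intros u v Hu Hv _. rewrite (Hone u Hu), (Hone v Hv); auto.
  - destruct Hw as [Hg _]. destruct (Hg a Ha) as [R [HR Hfa]].
    pose proof (PP_path HR) as PR. pose proof (prefl PR Hfa) as Hrr.
    assert (Hone' : forall t, in_seg R (f a) (f a) t -> t = f a).
    { intros t [A B]; apply (pantis PR); auto. }
    replace (img a a) with (segment R (f a) (f a)).
    + apply PP_seg; auto.
    + apply path_ext.
      * intro t; simpl; split.
        -- intros Ht. rewrite (Hone' t Ht). exists a; split; auto. split; auto.
        -- intros [w [Hw' <-]]. rewrite (Hone w Hw'). split; auto.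
      * intros p q; simpl; split.
        -- intros [_ [Hp Hq]]. rewrite (Hone' p Hp), (Hone' q Hq).
           exists a, a; repeat split; auto.
        -- intros [w1 [w2 [A1 [A2 [_ [<- <-]]]]]].
           rewrite (Hone w1 A1), (Hone w2 A2). repeat split; auto.
Qed.

Lemma good_sub c d u v : good c d -> ple P c u -> ple P u v -> ple P v d -> good u v.
Proof.
  intros [Hi Hpp] Hcu Huv Hvd. split.
  - exact (inj_sub Hi Hcu Hvd).
  - rewrite (E1 Hi Hcu Huv Hvd). apply PP_seg; auto.
    exists u, v. repeat split; auto; try apply (prefl HP); try apply (pmem HP Huv);
    first [exact (ptrans HP Huv Hvd) | exact (ptrans HP Hcu Huv)].
Qed.


Inductive chain (a : U) : U -> list (U * U) -> Prop :=
| ch_one t : ple P a t -> good a t -> chain a t ((a, t) :: nil)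
| ch_snoc s t L : chain a s L -> ple P s t -> good s t -> chain a t ((s, t) :: L).

Lemma chain_in {a t L} : chain a t L -> forall p, In p L -> ple P (fst p) (snd p) /\ good (fst p) (snd p).
Proof.
  induction 1; intros p Hp; simpl in Hp.
  - destruct Hp as [<-|[]]; simpl; auto.
  - destruct Hp as [<-|Hp]; simpl; auto.
Qed.

Lemma exists_chain : exists a m L, is_min P a /\ is_max P m /\ chain a m L.
Proof.
  pose proof HP as HP'.
  destruct HP' as [_ [_ [_ [_ [_ [[x0 Hx0] Hcomp]]]]]].
  destruct (Hcomp (pset P) (fun z h => h) (ex_intro _ x0 Hx0)) as [_ [a [[Ha [Halow _]] _]]].
  assert (Hamin : is_min P a) by (split; auto).
  set (G := fun t => pset P t /\ exists L, chain a t L).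
  assert (Ga : G a).
  { split; auto. exists ((a, a) :: nil). apply ch_one. apply (prefl HP Ha). apply good_trivial; auto. }
  destruct (Hcomp G (fun z h => proj1 h) (ex_intro _ a Ga)) as [[s [[Hs [Hsup Hlub]] _]] _].
  destruct Hw as [_ Hw2].
  assert (Gs : G s).
  { destruct (classic (is_min P s)) as [Hmin|Hnmin].
    - assert (s = a) by (apply (pantis HP); [apply Hmin; auto | apply Halow; auto]).
      subst; auto.
    - destruct (Hw2 s Hs) as [_ Hl]. destruct (Hl Hnmin) as [y [Hys [Hneq Hgood]]].
      destruct (classic (exists g, G g /\ ~ ple P g y)) as [[g [Gg Hng]]|Hno].
      + destruct (ptot HP (proj1 (pmem HP Hys)) (proj1 Gg)) as [Hyg|Hgy]; [|contradiction].
        pose proof (Hsup g Gg) as Hgs.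
        destruct (classic (g = s)) as [<-|Hgs']; auto.
        destruct Gg as [_ [L HL]].
        split; auto. exists ((g, s) :: L). apply ch_snoc; auto.
        apply (Hgood g); auto.
      + exfalso. apply Hneq. apply (pantis HP); auto. apply Hlub.
        * apply (pmem HP Hys).
        * intros z Gz. apply NNPP; intro Hc. apply Hno; eauto. }
  assert (Hsmax : is_max P s).
  { destruct (classic (is_max P s)) as [Hm|Hnm]; auto.
    destruct (Hw2 s Hs) as [Hr _]. destruct (Hr Hnm) as [y [Hsy [Hneq Hgood]]].
    exfalso. apply Hneq.
    assert (Gy : G y).
    { split. apply (pmem HP Hsy). destruct Gs as [_ [L HL]]. exists ((s, y) :: L).
      apply ch_snoc; auto. apply (Hgood y); auto. apply (prefl HP). apply (pmem HP Hsy). }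
    apply (pantis HP); auto. }
  destruct Gs as [_ [L HL]]. exists a, s, L. auto.
Qed.

Definition pieces (L : list (U * U)) := map (fun p => img (fst p) (snd p)) L.

Lemma piece_hat (Q : list (path T)) c d u v : good c d -> ple P c u -> ple P u v -> ple P v d ->
  In (img c d) Q -> hat (fun R => In R Q) (img u v).
Proof.
  intros [Hi Hpp] Hcu Huv Hvd HIn.
  rewrite (E1 Hi Hcu Huv Hvd). apply hat_seg; auto.
  exists u, v. repeat split; auto; try apply (prefl HP); try apply (pmem HP Huv);
    first [exact (ptrans HP Huv Hvd) | exact (ptrans HP Hcu Huv)].
Qed.

Lemma F_main {a t L} : chain a t L -> forall u v, ple P a u -> ple P u v -> ple P v t ->
  injective_on f (in_seg P u v) -> hat (fun R => In R (pieces L)) (img u v).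
Proof.
  induction 1 as [t Hat Hg|s t L Hch IH Hst Hg]; intros u v Hau Huv Hvt Hi.
  - eapply piece_hat; eauto. left; reflexivity.
  - destruct (ptot HP (proj2 (pmem HP Huv)) (proj1 (pmem HP Hst))) as [Hvs|Hsv].
    + eapply hat_mono; [|apply IH; eauto]. intros X HX; right; exact HX.
    + destruct (ptot HP (proj1 (pmem HP Huv)) (proj1 (pmem HP Hst))) as [Hus|Hsu].
      * destruct (E2 Hi Hus Hsv) as [Eq Hcon]. rewrite Eq. apply hat_cat; auto.
        -- eapply hat_mono; [intros X HX; right; exact HX|].
           apply IH; auto. apply (prefl HP). apply (pmem HP Hst).
           apply (inj_sub Hi). apply (prefl HP). apply (pmem HP Huv). exact Hsv.
        -- eapply piece_hat; eauto. apply (prefl HP). apply (pmem HP Hst). left; reflexivity.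
      * eapply piece_hat; eauto. left; reflexivity.
Qed.

Definition SF := S_f PP P f.

Lemma SF_piece c d : ple P c d -> good c d -> SF (img c d).
Proof. intros H [H1 H2]. exists c, d. repeat split; auto. Qed.

Lemma SF_path {R} : SF R -> is_path R.
Proof. intros [x [y [_ [_ [H ->]]]]]. apply (PP_path H). Qed.

Lemma hatSF_PP {R} : hat SF R -> PP R.
Proof.
  induction 1.
  - destruct H as [x' [y' [_ [_ [Hpp ->]]]]]. apply PP_seg; auto.
  - apply HPP; auto.
Qed.

Lemma piece_reach c d u v : good c d -> ple P c u -> ple P u v -> ple P v d ->
  reach (hat SF) (f u) (f v).
Proof.
  intros Hg Hcu Huv Hvd.
  assert (Hcd : ple P c d) by exact (ptrans HP (ptrans HP Hcu Huv) Hvd).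
  assert (Hl : ple (img c d) (f u) (f v)).
  { exists u, v. repeat split; auto; try apply (prefl HP); try apply (pmem HP Huv);
    first [exact (ptrans HP Huv Hvd) | exact (ptrans HP Hcu Huv)]. }
  exists (segment (img c d) (f u) (f v)). split.
  - apply hat_seg; auto. apply SF_piece; auto.
  - apply seg_minmax; auto. apply (PP_path (proj2 Hg)).
Qed.

Lemma chain_reach {a t L} : chain a t L -> forall u v, ple P a u -> ple P u v -> ple P v t ->
  reach (hat SF) (f u) (f v).
Proof.
  induction 1 as [t Hat Hg|s t L Hch IH Hst Hg]; intros u v Hau Huv Hvt.
  - eapply piece_reach; eauto.
  - destruct (ptot HP (proj2 (pmem HP Huv)) (proj1 (pmem HP Hst))) as [Hvs|Hsv].
    + apply IH; auto.
    + destruct (ptot HP (proj1 (pmem HP Huv)) (proj1 (pmem HP Hst))) as [Hus|Hsu].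
      * apply (trans_reach PP (hat SF)) with (y := f s).
        -- apply HPP.
        -- intros R HR; apply (hatSF_PP HR).
        -- intros R HR. apply (PP_path (hatSF_PP HR)).
        -- intros R a' b' HR Hab. apply (seg_closed SF (@SF_path)); auto.
           intros R' HR'. apply (PP_path (hatSF_PP HR')).
        -- intros. apply hat_cat; auto.
        -- apply IH; auto. apply (prefl HP). apply (pmem HP Hst).
        -- eapply piece_reach; eauto. apply (prefl HP). apply (pmem HP Hst).
      * eapply piece_reach; eauto.
Qed.


Lemma seg_minmax2 {B : path T} {x y} : ple B x y -> ple B x x -> ple B y y ->
  is_min (segment B x y) x /\ is_max (segment B x y) y.
Proof.
  intros Hxy Hxx Hyy. split; split; simpl; unfold in_seg.
  - auto.
  - intros u [H1 H2]; repeat split; auto.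
  - auto.
  - intros u [H1 H2]; repeat split; auto.
Qed.

Definition base := fun R => hat SF R \/ exists P', hat SF P' /\ R = inverse P'.

Lemma ground_bar {x} : ground (bar (hat SF)) x -> exists u, pset P u /\ x = f u.
Proof.
  intros [R [HR HxR]].
  destruct (hat_pset base R x) as [X [HX HxX]]; auto.
  { intros X a b [HX|[P' [HP' ->]]] Hab.
    - apply (pmem (PP_path (hatSF_PP HX)) Hab).
    - simpl in *. destruct (pmem (PP_path (hatSF_PP HP')) Hab); auto. }
  assert (Hgen : forall Y, hat SF Y -> pset Y x -> exists u, pset P u /\ x = f u).
  { intros Y HY HxY.
    destruct (hat_pset SF Y x) as [Z [HZ HxZ]]; auto.
    { intros Z a b HZ Hab. apply (pmem (SF_path HZ) Hab). }
    destruct HZ as [c [d [_ [_ [_ ->]]]]]. destruct HxZ as [w [[A _] <-]].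
    exists w; split; auto. apply (pmem HP A). }
  destruct HX as [HX|[P' [HP' ->]]]; eauto.
Qed.

Theorem main_in : finitary (induced PP P f) /\ dps_connected (induced PP P f).
Proof.
  destruct exists_chain as [a [m [L [Hamin [Hmmax Hch]]]]].
  split.
  - exists (pieces L). split.
    + intros R HR. unfold pieces in HR. apply in_map_iff in HR. destruct HR as [p [<- Hp]].
      destruct (chain_in Hch p Hp) as [_ [_ Hpp]]. exact (PP_path Hpp).
    + intro R; split.
      * apply hat_mono. intros X HX. apply in_map_iff in HX; destruct HX as [p [<- Hp]].
        destruct (chain_in Hch p Hp) as [Hle Hg]. apply SF_piece; auto.
      * intro H. induction H as [B x y HB Hxy|].
        -- destruct HB as [x' [y' [Hxy' [Hi [Hpp ->]]]]].
           destruct Hxy as [w1 [w2 [A1 [A2 [Le [<- <-]]]]]].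
           change (image_path P f x' y') with (img x' y').
           rewrite <- (E1 Hi (proj1 A1) Le (proj2 A2)).
           apply (F_main Hch); auto.
           ++ apply Hamin. apply (pmem HP Le).
           ++ apply Hmmax. apply (pmem HP Le).
           ++ exact (inj_sub Hi (proj1 A1) (proj2 A2)).
        -- apply hat_cat; auto.
  - unfold dps_connected. split.
    + exists (f a).
      assert (Haa : ple P a a) by (apply (prefl HP); apply Hamin).
      destruct (chain_reach Hch _ _ Haa Haa (ptrans HP Haa (proj2 Hmmax a (proj1 Hamin)))) as [R [HR [Hmi _]]].
      pose proof (PP_path (hatSF_PP HR)) as PR.
      assert (Hr : ple R (f a) (f a)) by (apply (prefl PR); apply Hmi).
      exists (segment R (f a) (f a)). split.
      * apply hat_seg; [left; exact HR | exact Hr].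
      * simpl; split; auto.
    + intros x y Hx Hy.
      destruct (ground_bar Hx) as [u [Hu ->]]. destruct (ground_bar Hy) as [v [Hv ->]].
      destruct (ptot HP Hu Hv) as [Huv|Hvu].
      * destruct (chain_reach Hch _ _ (proj2 Hamin u Hu) Huv (proj2 Hmmax v Hv)) as [R [HR [Hmi Hma]]].
        pose proof (PP_path (hatSF_PP HR)) as PR.
        assert (Hl : ple R (f u) (f v)) by (apply Hma; apply Hmi).
        exists (segment R (f u) (f v)). split.
        -- apply hat_seg; [left; exact HR | exact Hl].
        -- apply seg_minmax; auto.
      * destruct (chain_reach Hch _ _ (proj2 Hamin v Hv) Hvu (proj2 Hmmax u Hu)) as [R [HR [Hmi Hma]]].
        pose proof (PP_path (hatSF_PP HR)) as PR.
        assert (Hl : ple R (f v) (f u)) by (apply Hma; apply Hmi).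
        exists (segment (inverse R) (f u) (f v)). split.
        -- apply hat_seg. right; eauto. exact Hl.
        -- apply seg_minmax2; simpl; auto; apply (prefl PR); [apply Hma|apply Hmi].
Qed.

End W.

Theorem mainTheorem3 (U T : Type) (PP : path T -> Prop) (P : path U) (f : U -> T) :
  dipath_space PP -> is_path P -> walk PP P f ->
  finitary (induced PP P f) /\ dps_connected (induced PP P f).
Proof. intros H1 H2 H3. exact (main_in PP P f H1 H2 H3). Qed.
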